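(* Let $m$ be a non-negative integer. Then there is at most one tuple of complex numbers $(c_0,c_2,c_4,\dots,c_{2m})$ such that, identically as meromorphic functions of $s\in\mathbb{C}$, $$\zeta(-2m-1,s+2m+1)+c_{2m}\zeta(-2m,s+2m)+c_{2m-2}\zeta(-2m+2,s+2m-2)+\cdots+c_2\zeta(-2,s+2)+c_0\,\zeta(0,s)/2\equiv0;$$ that is, if such coefficients exist, they are uniquely determined.
   Context: For an integer $c\ge 0$, $\zeta(-c,s+c)$ denotes the Euler–Zagier double zeta function $\zeta(s_1,s_2)=\sum_{1\le n_1<n_2} n_1^{-s_1}n_2^{-s_2}$ evaluated at $(s_1,s_2)=(-c,s+c)$; i.e. it is the meromorphic continuation to all $s\in\mathbb{C}$ of the series $\sum_{m,n\ge1} m^{c}(m+n)^{-s-c}$, which converges absolutely for $\Re(s)>2$. *)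

(* Defs.v *)
From Stdlib Require Import Reals.
From Coquelicot Require Import Coquelicot.
Open Scope R_scope.

(* Complex power N^(-s) = exp(-s ln N) for a positive integer N and s : C:
   exp(-Re s * ln N) * (cos(Im s * ln N) - i sin(Im s * ln N)). *)
Definition cpow_neg (N : nat) (s : C) : C :=
  Cmult (RtoC (exp (- Re s * ln (INR N))))
        (cos (Im s * ln (INR N)), - sin (Im s * ln (INR N))).

(* Summand of zeta(-c, s+c) = sum_{m,n>=1} m^c (m+n)^(-s-c);
   indices i, j >= 0 stand for m = i+1, n = j+1. *)
Definition dz_term (c : nat) (s : C) (i j : nat) : C :=
  Cmult (RtoC (INR (S i) ^ c))
        (cpow_neg (S i + S j) (Cplus s (RtoC (INR c)))).

(* zeta(-c, s+c) on its domain of absolute convergence Re s > 2, as the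
   (absolutely convergent, hence order-independent) iterated double series. *)
Definition dzeta (c : nat) (s : C) : C :=
  (Series (fun i => Series (fun j => Re (dz_term c s i j))),
   Series (fun i => Series (fun j => Im (dz_term c s i j)))).

(* The combination
   zeta(-2m-1,s+2m+1) + sum_{k=1}^m c_{2k} zeta(-2k,s+2k) + c_0 zeta(0,s)/2,
   where coef k plays the role of c_{2k}. *)
Definition combo (m : nat) (coef : nat -> C) (s : C) : C :=
  Cplus (dzeta (2 * m + 1) s)
        (sum_n (fun k => Cmult (Cmult (coef k) (dzeta (2 * k) s))
                               (match k with O => RtoC (/ 2) | S _ => RtoC 1 end)) m).

(* Main.v *)
Require Import Defs.
From Stdlib Require Import Reals.
From Coquelicot Require Import Coquelicot.
From Stdlib Require Import Reals Lra Lia ZArith.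
From Coquelicot Require Import Coquelicot.
Open Scope R_scope.

Fixpoint fs (n : nat) (f : nat -> R) : R :=
  match n with O => 0 | S n' => fs n' f + f n' end.

Lemma fs_ext_lt n f g : (forall i, (i < n)%nat -> f i = g i) -> fs n f = fs n g.
Proof.
  induction n; simpl; intros H; auto.
  rewrite IHn by (intros; apply H; lia). rewrite H by lia. reflexivity.
Qed.

Lemma fs_ext n f g : (forall i, f i = g i) -> fs n f = fs n g.
Proof. intros H; apply fs_ext_lt; auto. Qed.

Lemma fs_plus n f g : fs n (fun i => f i + g i) = fs n f + fs n g.
Proof. induction n; simpl; [lra|]. rewrite IHn; ring. Qed.

Lemma fs_minus n f g : fs n (fun i => f i - g i) = fs n f - fs n g.
Proof. induction n; simpl; [lra|]. rewrite IHn; ring. Qed.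

Lemma fs_scal n c f : fs n (fun i => c * f i) = c * fs n f.
Proof. induction n; simpl; [lra|]. rewrite IHn; ring. Qed.

Lemma fs_zero n f : (forall i, (i < n)%nat -> f i = 0) -> fs n f = 0.
Proof. intros H. rewrite (fs_ext_lt n f (fun _ => 0)) by auto. induction n; simpl; auto; rewrite IHn; [ring|]. intros; apply H; lia. Qed.

Lemma fs_shift n f : fs (S n) f = f 0%nat + fs n (fun i => f (S i)).
Proof. induction n; simpl in *; [ring|]. rewrite IHn. ring. Qed.

Lemma fs_swap n m (f : nat -> nat -> R) :
  fs n (fun i => fs m (fun j => f i j)) = fs m (fun j => fs n (fun i => f i j)).
Proof.
  induction n; simpl.
  - symmetry; apply fs_zero; auto.
  - rewrite IHn, <- fs_plus. reflexivity.
Qed.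

Lemma fs_abs n f : Rabs (fs n f) <= fs n (fun i => Rabs (f i)).
Proof.
  induction n; simpl. rewrite Rabs_R0; lra.
  eapply Rle_trans; [apply Rabs_triang|]. lra.
Qed.

Lemma fs_le n f g : (forall i, (i < n)%nat -> f i <= g i) -> fs n f <= fs n g.
Proof.
  induction n; simpl; intros H; [lra|].
  assert (fs n f <= fs n g) by (apply IHn; intros; apply H; lia).
  specialize (H n ltac:(lia)). lra.
Qed.

Lemma fs_nonneg n f : (forall i, (i < n)%nat -> 0 <= f i) -> 0 <= fs n f.
Proof. intros H. rewrite <- (fs_zero n (fun _ => 0)) by auto. apply fs_le; auto. Qed.

Lemma fs_single n k v : (k < n)%nat -> fs n (fun i => if Nat.eqb i k then v else 0) = v.
Proof.
  induction n; intros Hk; [lia|]. simpl.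
  destruct (Nat.eq_dec k n).
  - subst. rewrite Nat.eqb_refl. rewrite fs_zero; [ring|].
    intros i Hi. destruct (Nat.eqb_spec i n); [lia|auto].
  - rewrite IHn by lia. destruct (Nat.eqb_spec n k); [lia|ring].
Qed.

Lemma fs_pad n M h : (n <= M)%nat ->
  fs n h = fs M (fun i => if Nat.ltb i n then h i else 0).
Proof.
  intros H. induction M.
  - assert (n = 0%nat) by lia. subst. reflexivity.
  - destruct (Nat.eq_dec n (S M)).
    + subst. simpl. rewrite (proj2 (Nat.ltb_lt M (S M))) by lia. f_equal.
      apply fs_ext_lt. intros i Hi. rewrite (proj2 (Nat.ltb_lt i (S M))) by lia. auto.
    + simpl. rewrite <- IHM by lia. rewrite (proj2 (Nat.ltb_ge M n)) by lia. ring.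
Qed.

Lemma fs_split a b f : fs (a + b) f = fs a f + fs b (fun i => f (a + i)%nat).
Proof.
  induction b; simpl. rewrite Nat.add_0_r; ring.
  rewrite Nat.add_succ_r. simpl. rewrite IHb. ring.
Qed.

Lemma sum_n_fs (f : nat -> R) m : sum_n f m = fs (S m) f.
Proof.
  induction m. rewrite sum_O. simpl. ring.
  rewrite sum_Sn, IHm. reflexivity.
Qed.

Lemma sum_f_R0_fs f m : sum_f_R0 f m = fs (S m) f.
Proof. induction m; simpl in *. ring. rewrite IHm. reflexivity. Qed.

Lemma sum_n_Re (f : nat -> C) m : Re (sum_n f m) = fs (S m) (fun k => Re (f k)).
Proof.
  induction m. rewrite sum_O. simpl. ring.
  rewrite sum_Sn. change (fs (S (S m)) ?g) with (fs (S m) g + g (S m)). rewrite <- IHm. reflexivity.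
Qed.

Lemma sum_n_Im (f : nat -> C) m : Im (sum_n f m) = fs (S m) (fun k => Im (f k)).
Proof.
  induction m. rewrite sum_O. simpl. ring.
  rewrite sum_Sn. change (fs (S (S m)) ?g) with (fs (S m) g + g (S m)). rewrite <- IHm. reflexivity.
Qed.
Fixpoint cf (M : nat) : nat -> R :=
  match M with
  | O => fun _ => 1
  | S M' => fun j => if Nat.leb j M' then cf M' j
            else - fs (S M') (fun i => cf M' i / INR (fact (S M' + 1 - i)))
  end.
Definition cb n := cf n n.

Lemma cf_eq M j : (j <= M)%nat -> cf M j = cb j.
Proof.
  induction M; intros H.
  - assert (j = 0%nat) by lia; subst; reflexivity.
  - destruct (Nat.leb_spec j M).
    + simpl. rewrite (proj2 (Nat.leb_le j M)) by lia. apply IHM; auto.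
    + assert (j = S M) by lia. subst. reflexivity.
Qed.

Lemma cb_rec M : fs (S M) (fun j => cb j / INR (fact (M + 1 - j))) = if Nat.eqb M 0 then 1 else 0.
Proof.
  destruct M.
  - simpl. unfold cb; simpl. field.
  - simpl Nat.eqb. change (fs (S (S M)) ?g) with (fs (S M) g + g (S M)). cbv beta.
    assert (Hc: cb (S M) = - fs (S M) (fun i => cb i / INR (fact (S M + 1 - i)))).
    { unfold cb at 1. cbn [cf]. rewrite (proj2 (Nat.leb_gt (S M) M)) by lia. f_equal.
      apply fs_ext_lt. intros i Hi. rewrite cf_eq by lia. reflexivity. }
    rewrite Hc. replace (S M + 1 - S M)%nat with 1%nat by lia.
    replace (INR (fact 1)) with 1 by reflexivity. unfold Rdiv at 2. rewrite Rinv_1. ring.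
Qed.

Lemma pow_diff x d : ((x + 1) ^ d - x ^ d) / INR (fact d) =
  fs d (fun l => x ^ l / (INR (fact l) * INR (fact (d - l)))).
Proof.
  rewrite binomial, sum_f_R0_fs. change (fs (S d) ?g) with (fs d g + g d).
  unfold Binomial.C. rewrite Nat.sub_diag, pow1.
  replace (INR (fact d) / (INR (fact d) * INR (fact 0)) * x ^ d * 1) with (x ^ d)
    by (simpl; field; apply INR_fact_neq_0).
  replace (fs d (fun i => INR (fact d) / (INR (fact i) * INR (fact (d - i))) * x ^ i * 1 ^ (d - i)) + x ^ d - x ^ d)
    with (INR (fact d) * fs d (fun l => x ^ l / (INR (fact l) * INR (fact (d - l))))).
  - field. apply INR_fact_neq_0.
  - rewrite <- fs_scal. unfold Rminus. rewrite Rplus_assoc, Rplus_opp_r, Rplus_0_r.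
    apply fs_ext. intros i. rewrite pow1. field. split; apply INR_fact_neq_0.
Qed.

Definition FS n N := fs N (fun a => INR a ^ n).

Lemma faul_step n x :
  fs (S n) (fun j => cb j * (((x + 1) ^ (S n - j) - x ^ (S n - j)) / INR (fact (S n - j))))
  = x ^ n / INR (fact n).
Proof.
  transitivity (fs (S n) (fun j => fs (S n) (fun l =>
     if Nat.ltb l (S n - j) then cb j * (x ^ l / (INR (fact l) * INR (fact (S n - j - l)))) else 0))).
  { apply fs_ext_lt. intros j Hj. rewrite pow_diff. rewrite <- fs_scal.
    rewrite (fs_pad (S n - j) (S n)) by lia. apply fs_ext. intros l.
    destruct (Nat.ltb l (S n - j)); ring. }
  rewrite fs_swap.
  transitivity (fs (S n) (fun l => x ^ l / INR (fact l) *
     fs (S (n - l)) (fun j => cb j / INR (fact (n - l + 1 - j))))).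
  { apply fs_ext_lt. intros l Hl. rewrite <- fs_scal.
    rewrite (fs_pad (S (n - l)) (S n)) by lia. apply fs_ext_lt. intros j Hj.
    destruct (Nat.ltb_spec l (S n - j)); destruct (Nat.ltb_spec j (S (n - l))); try lia.
    - replace (S n - j - l)%nat with (n - l + 1 - j)%nat by lia. field.
      split; apply INR_fact_neq_0.
    - ring. }
  transitivity (fs (S n) (fun l => if Nat.eqb l n then x ^ n / INR (fact n) else 0)).
  { apply fs_ext_lt. intros l Hl. rewrite cb_rec.
    destruct (Nat.eqb_spec l n); destruct (Nat.eqb_spec (n - l) 0); try lia.
    - subst. ring.
    - ring. }
  apply fs_single. lia.
Qed.

Lemma faul n N : FS n N =
  INR (fact n) * fs (S n) (fun j => cb j * INR N ^ (S n - j) / INR (fact (S n - j))).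
Proof.
  induction N.
  - unfold FS. simpl fs at 1. rewrite fs_zero; [ring|].
    intros j Hj. simpl INR. rewrite pow_i by lia. unfold Rdiv. ring.
  - unfold FS in *. simpl fs at 1. rewrite IHN.
    assert (E := faul_step n (INR N)).
    rewrite S_INR.
    replace (fs (S n) (fun j => cb j * (INR N + 1) ^ (S n - j) / INR (fact (S n - j)))) with
      (fs (S n) (fun j => cb j * INR N ^ (S n - j) / INR (fact (S n - j))) +
       fs (S n) (fun j => cb j * (((INR N + 1) ^ (S n - j) - INR N ^ (S n - j)) / INR (fact (S n - j))))).
    + rewrite E. field. apply INR_fact_neq_0.
    + rewrite <- fs_plus. apply fs_ext. intros j. field. apply INR_fact_neq_0.
Qed.
Definition Z3 (x : R) := exists p q : Z, (q mod 3 <> 0)%Z /\ x = IZR p / IZR q.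

Lemma mod3_nz q : (q mod 3 <> 0)%Z -> q <> 0%Z.
Proof. intros H E. subst. apply H. reflexivity. Qed.

Lemma mod3_mul q1 q2 : (q1 mod 3 <> 0)%Z -> (q2 mod 3 <> 0)%Z -> ((q1 * q2) mod 3 <> 0)%Z.
Proof.
  intros H1 H2. rewrite Z.mul_mod by lia.
  assert (A := Z.mod_pos_bound q1 3 ltac:(lia)). assert (B := Z.mod_pos_bound q2 3 ltac:(lia)).
  assert (q1 mod 3 = 1 \/ q1 mod 3 = 2)%Z as [E1|E1] by lia;
  assert (q2 mod 3 = 1 \/ q2 mod 3 = 2)%Z as [E2|E2] by lia;
  rewrite E1, E2; simpl; discriminate.
Qed.

Lemma Z3_IZR z : Z3 (IZR z).
Proof. exists z, 1%Z. split. simpl. discriminate. field. Qed.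

Lemma Z3_INR n : Z3 (INR n).
Proof. rewrite INR_IZR_INZ. apply Z3_IZR. Qed.

Lemma Z3_plus x y : Z3 x -> Z3 y -> Z3 (x + y).
Proof.
  intros (p1 & q1 & H1 & ->) (p2 & q2 & H2 & ->).
  exists (p1 * q2 + p2 * q1)%Z, (q1 * q2)%Z. split. apply mod3_mul; auto.
  rewrite plus_IZR, !mult_IZR. field. split; apply not_0_IZR; apply mod3_nz; auto.
Qed.

Lemma Z3_mult x y : Z3 x -> Z3 y -> Z3 (x * y).
Proof.
  intros (p1 & q1 & H1 & ->) (p2 & q2 & H2 & ->).
  exists (p1 * p2)%Z, (q1 * q2)%Z. split. apply mod3_mul; auto.
  rewrite !mult_IZR. field. split; apply not_0_IZR; apply mod3_nz; auto.
Qed.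

Lemma Z3_opp x : Z3 x -> Z3 (- x).
Proof.
  intros (p1 & q1 & H1 & ->). exists (- p1)%Z, q1. split; auto.
  rewrite opp_IZR. field. apply not_0_IZR; apply mod3_nz; auto.
Qed.

Lemma Z3_fs n f : (forall j, (j < n)%nat -> Z3 (f j)) -> Z3 (fs n f).
Proof.
  induction n; intros H; simpl. replace 0 with (IZR 0) by reflexivity. apply Z3_IZR.
  apply Z3_plus. apply IHn; intros; apply H; lia. apply H; lia.
Qed.

Lemma Z3_not y z : Z3 y -> IZR z = 3 * y -> (z mod 3 = 0)%Z.
Proof.
  intros (p & q & Hq & ->) E.
  assert (Hq0 := mod3_nz q Hq).
  assert (E2 : (z * q = 3 * p)%Z).
  { apply eq_IZR. rewrite !mult_IZR. rewrite E. field. apply not_0_IZR; auto. }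
  assert (M : ((z * q) mod 3 = 0)%Z) by (rewrite E2; rewrite Z.mul_comm; apply Z.mod_mul; lia).
  destruct (Z.eq_dec (z mod 3) 0); auto. exfalso. apply (mod3_mul z q); auto.
Qed.

Lemma binom_nat n j : (j <= n)%nat -> exists z : nat, Binomial.C n j = INR z.
Proof.
  revert j. induction n; intros j Hj.
  - assert (j = 0%nat) by lia; subst. exists 1%nat. rewrite C_n_0. reflexivity.
  - destruct j. exists 1%nat. rewrite C_n_0. reflexivity.
    destruct (Nat.eq_dec j n).
    + subst. exists 1%nat. unfold Binomial.C. rewrite Nat.sub_diag. change (fact 0) with 1%nat. change (INR 1) with 1. field. apply INR_fact_neq_0.
    + rewrite <- pascal by lia. destruct (IHn j ltac:(lia)) as [a Ha]. destruct (IHn (S j) ltac:(lia)) as [b Hb].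
      exists (a + b)%nat. rewrite plus_INR, Ha, Hb. reflexivity.
Qed.

Lemma Z3_binom n j : (j <= n)%nat -> Z3 (Binomial.C n j).
Proof. intros H. destruct (binom_nat n j H) as [z ->]. apply Z3_INR. Qed.

Lemma fact3 e : (1 <= e)%nat -> exists v w : nat, e = (3 ^ v * w)%nat /\ (w mod 3 <> 0)%nat.
Proof.
  induction e as [e IH] using (well_founded_induction lt_wf). intros He.
  destruct (Nat.eq_dec (e mod 3) 0) as [E|E].
  - assert (Hd := Nat.div_mod e 3 ltac:(lia)). rewrite E in Hd.
    destruct (IH (e / 3)%nat ltac:(lia) ltac:(lia)) as (v & w & Hv & Hw).
    exists (S v), w. split; auto. simpl. lia.
  - exists 0%nat, e. split; auto. simpl. lia.
Qed.

Lemma pow3_ge v : (1 <= v)%nat -> (v + 2 <= 3 ^ v)%nat.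
Proof. induction v; intros H. lia. destruct v. simpl. lia. simpl in *. specialize (IHv ltac:(lia)). lia. Qed.

Lemma Z3_pow3 d : (1 <= d)%nat -> Z3 (3 ^ (d - 1) / INR (d + 1)).
Proof.
  intros Hd. destruct (fact3 (d + 1) ltac:(lia)) as (v & w & Hv & Hw).
  assert (Hw0 : (1 <= w)%nat) by (destruct w; [simpl in Hw; lia| lia]).
  assert (Hvd : (v <= d - 1)%nat).
  { destruct v. lia. assert (H3 := pow3_ge (S v) ltac:(lia)). nia. }
  exists (3 ^ Z.of_nat (d - 1 - v))%Z, (Z.of_nat w). split.
  - intros E. apply Hw. apply Nat2Z.inj. rewrite Nat2Z.inj_mod. simpl. exact E.
  - rewrite <- pow_IZR, <- INR_IZR_INZ. rewrite Hv, mult_INR, pow_INR.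
    replace (d - 1)%nat with (d - 1 - v + v)%nat at 1 by lia. rewrite pow_add. replace (INR 3) with 3 by (simpl; ring).
    field. split.
    + apply not_0_INR. lia.
    + apply pow_nonzero. lra.
Qed.
Definition bn n := INR (fact n) * cb n.

Lemma FS3 n : (1 <= n)%nat -> FS n 3 = IZR (1 + 2 ^ Z.of_nat n).
Proof.
  intros H. unfold FS. simpl fs. rewrite plus_IZR, <- pow_IZR.
  replace (INR 2) with 2 by (simpl; ring). replace (INR 1) with 1 by reflexivity. replace (INR 0) with 0 by reflexivity. rewrite pow_i by lia. rewrite pow1. replace (1 + 1) with 2 by ring. ring.
Qed.

Lemma term_eq n j : (j < n)%nat ->
  INR (fact n) * (cb j * INR 3 ^ (S n - j) / INR (fact (S n - j))) =
  3 * (Binomial.C n j * (3 * bn j) * (3 ^ (n - j - 1) / INR (n - j + 1))).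
Proof.
  intros H. replace n with (j + S (n - j - 1))%nat by lia. set (d := (n - j - 1)%nat).
  replace (S (j + S d) - j)%nat with (S (S d)) by lia.
  replace (j + S d - j - 1)%nat with d by lia.
  replace (j + S d - j + 1)%nat with (S (S d)) by lia.
  unfold Binomial.C, bn. replace (j + S d - j)%nat with (S d) by lia.
  rewrite (fact_simpl (S d)). rewrite mult_INR.
  replace (INR 3) with 3 by (simpl; ring).
  simpl pow.
  field. repeat split; try apply INR_fact_neq_0; apply not_0_INR; lia.
Qed.

Lemma FS3_decomp n : (1 <= n)%nat ->
  FS n 3 = 3 * bn n + 3 * fs n (fun j => Binomial.C n j * (3 * bn j) * (3 ^ (n - j - 1) / INR (n - j + 1))).
Proof.
  intros H. rewrite faul. change (fs (S n) ?g) with (fs n g + g n). cbv beta.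
  rewrite Rmult_plus_distr_l, <- !fs_scal.
  rewrite (fs_ext_lt n _ (fun j => 3 * (Binomial.C n j * (3 * bn j) * (3 ^ (n - j - 1) / INR (n - j + 1))))).
  2:{ intros j Hj. apply term_eq; auto. }
  replace (S n - n)%nat with 1%nat by lia. unfold bn.
  change (INR (fact 1)) with 1. replace (INR 3) with 3 by (simpl; ring). field.
Qed.

Lemma pow4mod k : ((1 + 2 ^ Z.of_nat (2 * k)) mod 3 = 2)%Z.
Proof.
  rewrite Nat2Z.inj_mul, Z.pow_mul_r by lia. simpl (2 ^ Z.of_nat 2)%Z.
  assert (A : forall k, ((4 ^ Z.of_nat k) mod 3 = 1)%Z).
  { induction k0. reflexivity. rewrite Nat2Z.inj_succ, Z.pow_succ_r by lia.
    rewrite Z.mul_mod, IHk0 by lia. reflexivity. }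
  rewrite Z.add_mod, A by lia. reflexivity.
Qed.

Lemma bern_main N : forall n, (n <= N)%nat ->
  Z3 (3 * bn n) /\ (forall k, n = (2 * k)%nat -> (1 <= k)%nat -> cb n <> 0).
Proof.
  induction N; intros n Hn.
  - assert (n = 0%nat) by lia. subst. split.
    + unfold bn, cb. simpl. replace (3 * (1 * 1)) with (IZR 3) by (simpl; ring). apply Z3_IZR.
    + intros k Hk H1. lia.
  - destruct (Nat.le_gt_cases n N) as [Hl|Hl]. apply IHN; auto.
    assert (n = S N) by lia. subst n.
    set (Y := fs (S N) (fun j => Binomial.C (S N) j * (3 * bn j) * (3 ^ (S N - j - 1) / INR (S N - j + 1)))).
    assert (HY : Z3 Y).
    { apply Z3_fs. intros j Hj. apply Z3_mult. apply Z3_mult. apply Z3_binom; lia.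
      apply (proj1 (IHN j ltac:(lia))). replace (S N - j - 1)%nat with (S N - j - 1)%nat by lia.
      apply (Z3_pow3 (S N - j)). lia. }
    assert (E := FS3_decomp (S N) ltac:(lia)). rewrite FS3 in E by lia. fold Y in E.
    split.
    + replace (3 * bn (S N)) with (IZR (1 + 2 ^ Z.of_nat (S N)) + - (3 * Y)) by lra.
      apply Z3_plus. apply Z3_IZR. apply Z3_opp. apply Z3_mult; auto.
      replace 3 with (IZR 3) by reflexivity. apply Z3_IZR.
    + intros k Hk H1 Hc. assert (Hb : bn (S N) = 0) by (unfold bn; rewrite Hc; ring).
      rewrite Hb in E. assert (M := Z3_not Y _ HY ltac:(rewrite E; ring)).
      rewrite Hk in M. rewrite pow4mod in M. discriminate.
Qed.

Lemma cb_nz k : (1 <= k)%nat -> cb (2 * k) <> 0.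
Proof. intros H. apply (proj2 (bern_main (2 * k) (2 * k) (le_n _)) k); auto. Qed.
Lemma small_zero x K : (forall N, (2 <= N)%nat -> Rabs x <= K / INR N) -> x = 0.
Proof.
  intros H. destruct (Req_dec x 0) as [|Hx]; auto. exfalso.
  assert (Ha : 0 < Rabs x) by (apply Rabs_pos_lt; auto).
  destruct (INR_unbounded (K / Rabs x)) as [n Hn].
  set (N := (n + 2)%nat). specialize (H N ltac:(unfold N; lia)).
  assert (HN : INR n < INR N) by (apply lt_INR; unfold N; lia).
  assert (HN0 : 0 < INR N) by (apply lt_0_INR; unfold N; lia).
  assert (K0 : 0 <= K).
  { assert (0 <= K / INR N) by (eapply Rle_trans; [apply Rabs_pos| exact H]).
    apply (Rmult_le_compat_r (INR N)) in H0; [|lra]. unfold Rdiv in H0.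
    rewrite Rmult_assoc, Rinv_l in H0 by lra. lra. }
  assert (K / Rabs x < INR N) by lra.
  apply (Rmult_lt_compat_r (Rabs x)) in H0; auto. unfold Rdiv in H0.
  rewrite Rmult_assoc, Rinv_l in H0 by lra.
  apply (Rmult_le_compat_r (INR N)) in H; [|lra]. unfold Rdiv in H.
  rewrite Rmult_assoc, Rinv_l in H by lra. lra.
Qed.

Lemma poly_inv D : forall a : nat -> R,
  (forall N, (2 <= N)%nat -> fs D (fun j => a j / INR N ^ j) = 0) -> forall j, (j < D)%nat -> a j = 0.
Proof.
  induction D; intros a H j Hj. lia.
  assert (A0 : a 0%nat = 0).
  { apply (small_zero _ (fs D (fun j => Rabs (a (S j))))). intros N HN.
    specialize (H N HN). rewrite fs_shift in H. simpl pow in H.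
    assert (HN0 : 1 <= INR N) by (apply (le_INR 1); lia).
    replace (a 0%nat) with (- fs D (fun i => a (S i) / (INR N * INR N ^ i))) by (unfold Rdiv in *; lra).
    rewrite Rabs_Ropp. eapply Rle_trans. apply fs_abs.
    unfold Rdiv. rewrite Rmult_comm, <- fs_scal. apply fs_le. intros i Hi.
    rewrite Rabs_mult, Rabs_inv, Rabs_mult, (Rabs_pos_eq (INR N)) by lra.
    rewrite (Rabs_pos_eq (INR N ^ i)) by (apply pow_le; lra).
    assert (1 <= INR N ^ i) by (apply pow_R1_Rle; lra).
    rewrite Rinv_mult.
    assert (0 <= Rabs (a (S i))) by apply Rabs_pos.
    assert (0 < / INR N) by (apply Rinv_0_lt_compat; lra).
    assert (/ INR N ^ i <= 1) by (rewrite <- Rinv_1; apply Rinv_le_contravar; lra).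
    assert (0 < / INR N ^ i) by (apply Rinv_0_lt_compat; lra).
    rewrite <- Rmult_assoc, (Rmult_comm (Rabs _)), Rmult_assoc.
    apply Rmult_le_compat_l; [lra|].
    rewrite <- (Rmult_1_r (Rabs (a (S i)))) at 2. apply Rmult_le_compat_l; lra. }
  destruct j. auto.
  apply (IHD (fun i => a (S i))); [|lia].
  intros N HN. specialize (H N HN). rewrite fs_shift, A0 in H.
  assert (HN0 : 0 < INR N) by (apply lt_0_INR; lia).
  replace (fs D (fun j0 => a (S j0) / INR N ^ j0)) with
     (INR N * fs D (fun i => a (S i) / INR N ^ (S i))).
  + unfold Rdiv at 1 in H. rewrite Rmult_0_l, Rplus_0_l in H. rewrite H. ring.
  + rewrite <- fs_scal. apply fs_ext. intros i. simpl pow. field. split; [|lra].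
    apply pow_nonzero; lra.
Qed.
Definition qc (r : nat -> R) j k := if Nat.leb j (2 * k) then
  r k * INR (fact (2 * k)) * cb j / INR (fact (S (2 * k) - j)) else 0.
Definition ac r m j := fs (S m) (fun k => qc r j k) - (if Nat.eqb j 1 then r 0%nat else 0).

Lemma sum_shift_pow k l : fs (S l) (fun i => INR (S i) ^ (2 * k)) =
  FS (2 * k) (l + 2) - (if Nat.eqb k 0 then 1 else 0).
Proof.
  unfold FS. replace (l + 2)%nat with (S (S l)) by lia. rewrite (fs_shift (S l)).
  destruct k. simpl Nat.eqb. simpl (2 * 0)%nat. rewrite pow_O. ring.
  simpl Nat.eqb. simpl INR at 2. rewrite pow_i by lia. ring.
Qed.

Lemma stepT r m k N : (k <= m)%nat -> (1 <= N)%nat ->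
  r k * FS (2 * k) N / INR N ^ (2 * k) = fs (2 * m + 2) (fun j => qc r j k * (INR N / INR N ^ j)).
Proof.
  intros Hk HN. assert (N0 : 0 < INR N) by (apply lt_0_INR; lia).
  rewrite faul. rewrite (fs_pad (S (2 * k)) (2 * m + 2)) by lia.
  unfold Rdiv at 1. rewrite (Rmult_comm (r k)). rewrite Rmult_assoc, Rmult_comm, <- !Rmult_assoc.
  rewrite <- fs_scal. apply fs_ext. intros j. unfold qc.
  destruct (Nat.ltb_spec j (S (2 * k))); destruct (Nat.leb_spec j (2 * k)); try lia.
  - replace (INR N ^ (2 * k)) with (INR N ^ (S (2 * k) - j) * INR N ^ j / INR N).
    + field. repeat split; try apply INR_fact_neq_0; try apply pow_nonzero; lra.
    + rewrite <- pow_add. replace (S (2 * k) - j + j)%nat with (S (2 * k)) by lia. simpl pow. field. lra.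
  - ring.
Qed.

Lemma H_expand r m l :
  fs (S l) (fun i => fs (S m) (fun k => r k * INR (S i) ^ (2 * k) / INR (l + 2) ^ (2 * k))) =
  INR (l + 2) * fs (2 * m + 2) (fun j => ac r m j / INR (l + 2) ^ j).
Proof.
  set (N := (l + 2)%nat). assert (N0 : 0 < INR N) by (apply lt_0_INR; unfold N; lia).
  rewrite fs_swap.
  transitivity (fs (S m) (fun k => r k * FS (2 * k) N / INR N ^ (2 * k) -
                                  (if Nat.eqb k 0 then r 0%nat else 0))).
  { apply fs_ext. intros k. unfold Rdiv.
    rewrite (fs_ext _ _ (fun i => r k * / INR N ^ (2 * k) * INR (S i) ^ (2 * k))) by (intros; ring).
    rewrite fs_scal. unfold N. rewrite sum_shift_pow. fold N.
    destruct (Nat.eqb_spec k 0). subst. simpl. field. ring. }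
  rewrite fs_minus.
  rewrite (fs_single (S m) 0 (r 0%nat)) by lia.
  rewrite (fs_ext_lt (S m) _ (fun k => fs (2 * m + 2) (fun j => qc r j k * (INR N / INR N ^ j))))
    by (intros k Hk; apply stepT; unfold N; lia).
  rewrite fs_swap.
  replace (r 0%nat) with (fs (2 * m + 2) (fun j => (if Nat.eqb j 1 then r 0%nat else 0) * (INR N / INR N ^ j))).
  - rewrite <- fs_minus, <- fs_scal. apply fs_ext. intros j. unfold ac.
    rewrite (fs_ext _ _ (fun k => (INR N / INR N ^ j) * qc r j k)) by (intros; ring).
    rewrite fs_scal. change (fun k => qc r j k) with (qc r j). field. apply pow_nonzero; lra.
  - rewrite (fs_ext _ _ (fun j => if Nat.eqb j 1 then r 0%nat else 0)).
    + apply fs_single. lia.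
    + intros j. destruct (Nat.eqb_spec j 1). subst. simpl pow. field. lra. ring.
Qed.

Lemma alg_main m r :
  (forall l, fs (S l) (fun i => fs (S m) (fun k => r k * INR (S i) ^ (2 * k) / INR (l + 2) ^ (2 * k))) = 0) ->
  forall k, (k <= m)%nat -> r k = 0.
Proof.
  intros H.
  assert (A : forall j, (j < 2 * m + 2)%nat -> ac r m j = 0).
  { apply poly_inv. intros N HN. specialize (H (N - 2)%nat).
    rewrite H_expand in H. replace (N - 2 + 2)%nat with N in H by lia.
    assert (0 < INR N) by (apply lt_0_INR; lia).
    apply Rmult_integral in H. destruct H; auto. lra. }
  assert (B : forall t k, (1 <= k <= m)%nat -> (m - k <= t)%nat -> r k = 0).
  { induction t; intros k Hk Ht.
    - assert (k = m) by lia. subst k.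
      specialize (A (2 * m)%nat ltac:(lia)). unfold ac in A.
      rewrite (proj2 (Nat.eqb_neq (2 * m) 1)) in A by lia.
      rewrite (fs_ext_lt (S m) _ (fun k => if Nat.eqb k m then r m * INR (fact (2 * m)) * cb (2 * m) else 0)) in A.
      + rewrite fs_single in A by lia. assert (cb (2 * m) <> 0) by (apply cb_nz; lia).
        assert (INR (fact (2 * m)) <> 0) by apply INR_fact_neq_0.
        assert (r m * (INR (fact (2 * m)) * cb (2 * m)) = 0) by lra.
        apply Rmult_integral in H2. destruct H2; auto. apply Rmult_integral in H2. tauto.
      + intros k' Hk'. unfold qc. destruct (Nat.eqb_spec k' m).
        * subst. rewrite Nat.leb_refl. replace (S (2 * m) - 2 * m)%nat with 1%nat by lia.
          change (INR (fact 1)) with 1. field.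
        * rewrite (proj2 (Nat.leb_gt (2 * m) (2 * k'))) by lia. reflexivity.
    - destruct (Nat.le_gt_cases (m - k) t). apply IHt; auto.
      specialize (A (2 * k)%nat ltac:(lia)). unfold ac in A.
      rewrite (proj2 (Nat.eqb_neq (2 * k) 1)) in A by lia.
      rewrite (fs_ext_lt (S m) _ (fun k' => if Nat.eqb k' k then r k * INR (fact (2 * k)) * cb (2 * k) else 0)) in A.
      + rewrite fs_single in A by lia. assert (cb (2 * k) <> 0) by (apply cb_nz; lia).
        assert (INR (fact (2 * k)) <> 0) by apply INR_fact_neq_0.
        assert (r k * (INR (fact (2 * k)) * cb (2 * k)) = 0) by lra.
        apply Rmult_integral in H3. destruct H3; auto. apply Rmult_integral in H3. tauto.
      + intros k' Hk'. unfold qc. destruct (Nat.eqb_spec k' k).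
        * subst. rewrite Nat.leb_refl. replace (S (2 * k) - 2 * k)%nat with 1%nat by lia.
          change (INR (fact 1)) with 1. field.
        * destruct (Nat.leb_spec (2 * k) (2 * k')).
          -- rewrite (IHt k') by lia. unfold Rdiv; ring.
          -- reflexivity. }
  intros k Hk. destruct k. 2:{ apply (B m); lia. }
  specialize (H 0%nat). change (fs 1 ?g) with (fs 0 g + g 0%nat) in H. cbv beta in H. change (fs 0 _) with 0 in H.
  rewrite (fs_ext_lt (S m) _ (fun k => if Nat.eqb k 0 then r 0%nat else 0)) in H.
  - rewrite fs_single in H by lia. lra.
  - intros k Hk'. destruct (Nat.eqb_spec k 0).
    + subst. simpl. field.
    + rewrite (B m k) by lia. unfold Rdiv; ring.
Qed.
Lemma norm_R (x : R) : norm x = Rabs x.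
Proof. reflexivity. Qed.

Lemma Series_zero : Series (fun _ => 0) = 0.
Proof. rewrite (Series_ext _ (fun n => 0 * 0)) by (intros; ring). rewrite Series_scal_l. ring. Qed.

Lemma finite_series a K : (forall j, (K <= j)%nat -> a j = 0) -> ex_series a /\ Series a = fs K a.
Proof.
  intros H. assert (is_series a (fs K a)).
  { apply is_series_Reals. intros eps Heps. exists K. intros n Hn.
    rewrite sum_f_R0_fs. replace (S n) with (K + (S n - K))%nat by lia. rewrite fs_split.
    rewrite (fs_zero (S n - K)) by (intros; apply H; lia).
    unfold Rdist. replace (fs K a + 0 - fs K a) with 0 by ring. rewrite Rabs_R0. auto. }
  split. exists (fs K a); auto. apply is_series_unique; auto.
Qed.

Lemma exR_scal c (a : nat -> R) : ex_series a -> ex_series (fun n => c * a n).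
Proof. apply (@ex_series_scal_l R_AbsRing R_NormedModule). Qed.
Lemma exR_plus (a b : nat -> R) : ex_series a -> ex_series b -> ex_series (fun n => a n + b n).
Proof. apply (@ex_series_plus R_AbsRing R_NormedModule). Qed.
Lemma exR_le (a b : nat -> R) : (forall n, Rabs (a n) <= b n) -> ex_series b -> ex_series a.
Proof. apply (@ex_series_le R_AbsRing R_CompleteNormedModule). Qed.
Lemma exR_ext (a b : nat -> R) : (forall n, a n = b n) -> ex_series a -> ex_series b.
Proof. apply (@ex_series_ext R_AbsRing R_NormedModule). Qed.

Lemma tel_series : is_series (fun j => / INR (S j) - / INR (S (S j))) 1.
Proof.
  apply is_series_Reals. intros eps Heps.
  destruct (archimed_cor1 eps Heps) as [N [HN HN0]]. exists N. intros n Hn.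
  assert (E : forall n, sum_f_R0 (fun j => / INR (S j) - / INR (S (S j))) n = 1 - / INR (S (S n))).
  { induction n0. simpl. field. rewrite tech5, IHn0. ring. }
  rewrite E. unfold Rdist.
  replace (1 - / INR (S (S n)) - 1) with (- / INR (S (S n))) by ring.
  rewrite Rabs_Ropp. rewrite Rabs_pos_eq.
  - eapply Rle_lt_trans; [|exact HN]. apply Rinv_le_contravar. apply lt_0_INR; lia. apply le_INR; lia.
  - left. apply Rinv_0_lt_compat. apply lt_0_INR; lia.
Qed.

Definition wsq j := / INR (S j) ^ 2.

Lemma wsq_pos j : 0 < wsq j.
Proof. unfold wsq. apply Rinv_0_lt_compat. apply pow_lt. apply lt_0_INR; lia. Qed.

Lemma ex_wsq : ex_series wsq.
Proof.
  apply (exR_le _ (fun j => 2 * (/ INR (S j) - / INR (S (S j))))).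
  - intros j. rewrite Rabs_pos_eq by (left; apply wsq_pos). unfold wsq.
    assert (A : 0 < INR (S j)) by (apply lt_0_INR; lia).
    rewrite S_INR with (n := S j).
    replace (2 * (/ INR (S j) - / (INR (S j) + 1))) with (2 / (INR (S j) * (INR (S j) + 1))) by (field; lra).
    assert (1 <= INR (S j)) by (apply (le_INR 1); lia).
    replace (2 / (INR (S j) * (INR (S j) + 1))) with (/ (INR (S j) * (INR (S j) + 1) / 2)) by (field; lra).
    replace (INR (S j) ^ 2) with (INR (S j) * INR (S j)) by ring.
    apply Rinv_le_contravar; nra.
  - exists (2 * 1). apply (is_series_scal_l 2 _ 1), tel_series.
Qed.

Definition Zs := Series wsq.

Lemma Zs_nonneg : 0 <= Zs.
Proof.
  unfold Zs. rewrite <- Series_zero. apply Series_le; [|apply ex_wsq].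
  intros; split; [lra|left; apply wsq_pos].
Qed.

Definition DS (f : nat -> nat -> R) := (forall i, ex_series (f i)) /\ ex_series (fun i => Series (f i)).

Lemma DS_bound f K : (forall i j, Rabs (f i j) <= K * (wsq i * wsq j)) ->
  DS f /\ Rabs (Series (fun i => Series (f i))) <= K * (Zs * Zs).
Proof.
  intros H.
  assert (K0 : 0 <= K).
  { specialize (H 0%nat 0%nat). assert (0 < wsq 0 * wsq 0) by (apply Rmult_lt_0_compat; apply wsq_pos).
    assert (0 <= Rabs (f 0%nat 0%nat)) by apply Rabs_pos. nra. }
  assert (Hin : forall i, ex_series (f i)).
  { intros i. apply (exR_le _ (fun j => (K * wsq i) * wsq j)).
    - intros j. rewrite Rmult_assoc. apply H.
    - apply (exR_scal (K * wsq i)), ex_wsq. }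
  assert (Hib : forall i, Rabs (Series (f i)) <= (K * Zs) * wsq i).
  { intros i. eapply Rle_trans. apply Series_Rabs.
    apply (exR_le _ (fun j => (K * wsq i) * wsq j)).
    - intros j. rewrite Rabs_Rabsolu. rewrite Rmult_assoc. apply H.
    - apply (exR_scal (K * wsq i)), ex_wsq.
    - replace (K * Zs * wsq i) with (Series (fun j => (K * wsq i) * wsq j)).
      + apply Series_le. intros j; split. apply Rabs_pos. rewrite Rmult_assoc; apply H.
        apply (exR_scal (K * wsq i)), ex_wsq.
      + rewrite Series_scal_l. unfold Zs. ring. }
  assert (Hout : ex_series (fun i => Series (f i))).
  { apply (exR_le _ (fun i => (K * Zs) * wsq i)).
    - intros i. apply Hib.
    - apply (exR_scal (K * Zs)), ex_wsq. }
  split. split; auto.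
  eapply Rle_trans. apply Series_Rabs.
  apply (exR_le _ (fun i => (K * Zs) * wsq i)).
  - intros i. rewrite Rabs_Rabsolu. apply Hib.
  - apply (exR_scal (K * Zs)), ex_wsq.
  - replace (K * (Zs * Zs)) with (Series (fun i => (K * Zs) * wsq i)).
    + apply Series_le. intros i; split. apply Rabs_pos. apply Hib.
      apply (exR_scal (K * Zs)), ex_wsq.
    + rewrite Series_scal_l. unfold Zs at 2. ring.
Qed.

Lemma DS_plus f g : DS f -> DS g ->
  DS (fun i j => f i j + g i j) /\
  Series (fun i => Series (fun j => f i j + g i j)) =
  Series (fun i => Series (f i)) + Series (fun i => Series (g i)).
Proof.
  intros [F1 F2] [G1 G2].
  assert (E : forall i, Series (fun j => f i j + g i j) = Series (f i) + Series (g i))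
    by (intros; apply Series_plus; auto).
  split. split.
  - intros i. apply (exR_plus (f i) (g i)); auto.
  - apply (exR_ext (fun i => Series (f i) + Series (g i))).
    intros; symmetry; apply E. apply (exR_plus (fun i => Series (f i)) (fun i => Series (g i))); auto.
  - rewrite (Series_ext _ (fun i => Series (f i) + Series (g i))) by apply E.
    apply Series_plus; auto.
Qed.

Lemma DS_scal c f : DS f -> DS (fun i j => c * f i j) /\
  Series (fun i => Series (fun j => c * f i j)) = c * Series (fun i => Series (f i)).
Proof.
  intros [F1 F2].
  assert (E : forall i, Series (fun j => c * f i j) = c * Series (f i)) by (intros; apply Series_scal_l).
  split. split.
  - intros i. apply (exR_scal c (f i)); auto.
  - apply (exR_ext (fun i => c * Series (f i))).
    intros; symmetry; apply E. apply (exR_scal c (fun i => Series (f i))); auto.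
  - rewrite (Series_ext _ (fun i => c * Series (f i))) by apply E. apply Series_scal_l.
Qed.

Lemma DS_fs M (r : nat -> R) (f : nat -> nat -> nat -> R) :
  (forall k, (k < M)%nat -> DS (f k)) ->
  DS (fun i j => fs M (fun k => r k * f k i j)) /\
  Series (fun i => Series (fun j => fs M (fun k => r k * f k i j))) =
  fs M (fun k => r k * Series (fun i => Series (f k i))).
Proof.
  induction M; intros H.
  - simpl. split. split. intros; exists 0. apply (is_series_ext (fun _ => 0)); auto.
    apply is_series_Reals. intros e He. exists 0%nat. intros. rewrite sum_f_R0_fs, fs_zero by auto.
    unfold Rdist. rewrite Rminus_0_r, Rabs_R0. auto.
    apply (exR_ext (fun _ => 0)). intros; rewrite Series_zero; auto.
    exists 0. apply is_series_Reals. intros e He. exists 0%nat. intros. rewrite sum_f_R0_fs, fs_zero by auto.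
    unfold Rdist. rewrite Rminus_0_r, Rabs_R0. auto.
    rewrite (Series_ext _ (fun _ => 0)). apply Series_zero. intros; apply Series_zero.
  - destruct (IHM ltac:(intros; apply H; lia)) as [D1 E1].
    destruct (DS_scal (r M) (f M) (H M ltac:(lia))) as [D2 E2].
    destruct (DS_plus _ _ D1 D2) as [D3 E3].
    simpl fs. split; auto. rewrite E3, E1, E2. reflexivity.
Qed.
Lemma inv_bound i j p B : 1 <= B -> B <= INR (S i + S j) ->
  / INR (S i + S j) ^ (p + 4) <= / B ^ p * (wsq i * wsq j).
Proof.
  intros HB HBM. unfold wsq.
  set (a := INR (S i)). set (b := INR (S j)).
  assert (Ha : 1 <= a) by (apply (le_INR 1); lia).
  assert (Hb : 1 <= b) by (apply (le_INR 1); lia).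
  assert (HM : INR (S i + S j) = a + b) by (unfold a, b; apply plus_INR).
  rewrite HM in *.
  assert (P1 : 0 < B ^ p) by (apply pow_lt; lra).
  assert (P2 : B ^ p <= (a + b) ^ p) by (apply pow_incr; lra).
  rewrite <- !Rinv_mult. apply Rinv_le_contravar.
  - apply Rmult_lt_0_compat; auto. apply Rmult_lt_0_compat; apply pow_lt; lra.
  - rewrite pow_add. apply Rmult_le_compat; try lra.
    + apply Rmult_le_pos; apply pow_le; lra.
    + replace ((a + b) ^ 4) with ((a + b) ^ 2 * (a + b) ^ 2) by ring.
      apply Rmult_le_compat; try (apply pow_le; lra); apply pow_incr; lra.
Qed.

Definition fD c n i j := INR (S i) ^ c / INR (S i + S j) ^ (n + c).

Lemma fD_le c n i j : Rabs (fD c n i j) <= / INR (S i + S j) ^ n.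
Proof.
  unfold fD. assert (Ha : 0 < INR (S i)) by (apply lt_0_INR; lia).
  assert (HM : INR (S i) <= INR (S i + S j)) by (apply le_INR; lia).
  assert (0 < INR (S i + S j) ^ n) by (apply pow_lt; lra).
  assert (0 < INR (S i + S j) ^ c) by (apply pow_lt; lra).
  assert (INR (S i) ^ c <= INR (S i + S j) ^ c) by (apply pow_incr; lra).
  assert (0 < INR (S i) ^ c) by (apply pow_lt; lra).
  rewrite Rabs_pos_eq.
  - rewrite pow_add. unfold Rdiv. rewrite Rinv_mult.
    rewrite <- (Rmult_1_l (/ INR (S i + S j) ^ n)) at 2.
    rewrite (Rmult_comm (/ _ ^ n)), <- Rmult_assoc. apply Rmult_le_compat_r.
    left; apply Rinv_0_lt_compat; auto.
    apply (Rmult_le_reg_r (INR (S i + S j) ^ c)); auto. rewrite Rmult_assoc, Rinv_l; lra.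
  - unfold Rdiv. apply Rmult_le_pos. lra. left; apply Rinv_0_lt_compat; apply pow_lt; lra.
Qed.

Lemma fD_DS c p : DS (fD c (p + 4)).
Proof.
  refine (proj1 (DS_bound _ 1 _)). intros i j. eapply Rle_trans. apply fD_le.
  eapply Rle_trans. apply (inv_bound i j p 1). lra. apply (le_INR 1); lia.
  rewrite pow1, Rinv_1. lra.
Qed.

Definition Dr c n := Series (fun i => Series (fun j => fD c n i j)).

Definition gq (r : nat -> R) m i (M : nat) := fs (S m) (fun k => r k * INR (S i) ^ (2 * k) / INR M ^ (2 * k)).

Definition Cr (r : nat -> R) m := fs (S m) (fun k => Rabs (r k)).

Lemma gq_bound r m i M : (S i <= M)%nat -> Rabs (gq r m i M) <= Cr r m.
Proof.
  intros H. unfold gq, Cr. eapply Rle_trans. apply fs_abs. apply fs_le. intros k Hk.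
  assert (Ha : 0 < INR (S i)) by (apply lt_0_INR; lia).
  assert (HM : INR (S i) <= INR M) by (apply le_INR; lia).
  assert (P : 0 < INR M ^ (2 * k)) by (apply pow_lt; lra).
  assert (INR (S i) ^ (2 * k) <= INR M ^ (2 * k)) by (apply pow_incr; lra).
  assert (0 < INR (S i) ^ (2 * k)) by (apply pow_lt; lra).
  unfold Rdiv. rewrite Rabs_mult, Rabs_mult, (Rabs_pos_eq (INR (S i) ^ _)) by lra.
  rewrite (Rabs_pos_eq (/ INR M ^ (2 * k))) by (left; apply Rinv_0_lt_compat; auto).
  rewrite Rmult_assoc. rewrite <- (Rmult_1_r (Rabs (r k))) at 2.
  apply Rmult_le_compat_l. apply Rabs_pos.
  apply (Rmult_le_reg_r (INR M ^ (2 * k))); auto. rewrite Rmult_assoc, Rinv_l; lra.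
Qed.

Lemma u_eq r m n i j : fs (S m) (fun k => r k * fD (2 * k) n i j) =
  gq r m i (S i + S j) / INR (S i + S j) ^ n.
Proof.
  unfold gq, Rdiv. rewrite Rmult_comm, <- fs_scal. apply fs_ext. intros k. unfold fD.
  assert (0 < INR (S i + S j)) by (apply lt_0_INR; lia).
  rewrite pow_add. field. split; apply pow_nonzero; lra.
Qed.

Lemma tri L (u : nat -> nat -> R) :
  fs L (fun i => fs (L - i) (u i)) = fs L (fun t => fs (S t) (fun i => u i (t - i)%nat)).
Proof.
  induction L. reflexivity.
  change (fs (S L) ?g) with (fs L g + g L). cbv beta. rewrite <- IHL.
  rewrite (fs_ext_lt L (fun i => fs (S L - i) (u i)) (fun i => fs (L - i) (u i) + u i (L - i)%nat)).
  - rewrite fs_plus. change (fs (S L) ?g) with (fs L g + g L). cbv beta.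
    replace (S L - L)%nat with 1%nat by lia. rewrite Nat.sub_diag. simpl. ring.
  - intros i Hi. replace (S L - i)%nat with (S (L - i)) by lia. reflexivity.
Qed.

Lemma geo_zero x K rho : 0 <= rho < 1 -> (forall p, Rabs x <= K * rho ^ p) -> x = 0.
Proof.
  intros Hr H. destruct (Req_dec x 0) as [|Hx]; auto. exfalso.
  assert (Ha : 0 < Rabs x) by (apply Rabs_pos_lt; auto).
  assert (HK : 0 < K) by (specialize (H 0%nat); simpl in H; lra).
  destruct (pow_lt_1_zero rho ltac:(rewrite Rabs_pos_eq; lra) (Rabs x / K)) as [P HP].
  apply Rdiv_lt_0_compat; auto.
  specialize (HP P (le_n _)). specialize (H P). rewrite Rabs_pos_eq in HP by (apply pow_le; lra).
  apply (Rmult_lt_compat_l K) in HP; auto. unfold Rdiv in HP.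
  rewrite (Rmult_comm (Rabs x)), <- Rmult_assoc, Rinv_r, Rmult_1_l in HP; lra.
Qed.
Lemma extract r m : (forall p, fs (S m) (fun k => r k * Dr (2 * k) (p + 4)) = 0) ->
  forall l, fs (S l) (fun i => gq r m i (l + 2)) = 0.
Proof.
  intros HG l. induction l as [l IH] using (well_founded_induction lt_wf).
  set (N := INR (l + 2)). set (N3 := INR (l + 3)).
  assert (HN : 2 <= N) by (unfold N; replace 2 with (INR 2) by (simpl; ring); apply le_INR; lia).
  assert (HN3 : N + 1 = N3) by (unfold N, N3; replace (l + 3)%nat with (S (l + 2)) by lia; rewrite S_INR; ring).
  assert (Cr0 : 0 <= Cr r m) by (unfold Cr; apply fs_nonneg; intros; apply Rabs_pos).
  apply (geo_zero _ (Cr r m * (Zs * Zs) * N ^ 4) (N / N3)).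
  { split. unfold Rdiv; apply Rmult_le_pos; [lra | left; apply Rinv_0_lt_compat; lra].
    apply (Rmult_lt_reg_r N3). lra. unfold Rdiv; rewrite Rmult_assoc, Rinv_l; lra. }
  intros p. set (n := (p + 4)%nat).
  set (u := fun i j => fs (S m) (fun k => r k * fD (2 * k) n i j)).
  assert (Hu : forall i j, Rabs (u i j) <= Cr r m * / INR (S i + S j) ^ n).
  { intros i j. unfold u. rewrite u_eq. unfold Rdiv. rewrite Rabs_mult.
    assert (0 < INR (S i + S j)) by (apply lt_0_INR; lia).
    rewrite (Rabs_pos_eq (/ _)) by (left; apply Rinv_0_lt_compat, pow_lt; lra).
    apply Rmult_le_compat_r. left; apply Rinv_0_lt_compat, pow_lt; lra.
    apply gq_bound. lia. }
  destruct (DS_fs (S m) r (fun k => fD (2 * k) n) ltac:(intros; apply fD_DS)) as [DSu Eu].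
  assert (G0 : Series (fun i => Series (u i)) = 0).
  { rewrite <- (HG p). exact Eu. }
  set (w := fun i j => if Nat.ltb (i + j) (S l) then u i j else 0).
  set (v := fun i j => if Nat.ltb (i + j) (S l) then 0 else u i j).
  assert (Bw : forall i j, Rabs (w i j) <= Cr r m * (wsq i * wsq j)).
  { intros i j. unfold w. destruct (Nat.ltb (i + j) (S l)).
    - eapply Rle_trans. apply Hu. apply Rmult_le_compat_l; auto.
      eapply Rle_trans. apply (inv_bound i j p 1). lra. apply (le_INR 1); lia.
      rewrite pow1, Rinv_1. lra.
    - rewrite Rabs_R0. apply Rmult_le_pos; auto. apply Rmult_le_pos; left; apply wsq_pos. }
  assert (Bv : forall i j, Rabs (v i j) <= (Cr r m * / N3 ^ p) * (wsq i * wsq j)).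
  { intros i j. unfold v. destruct (Nat.ltb_spec (i + j) (S l)).
    - rewrite Rabs_R0. apply Rmult_le_pos. apply Rmult_le_pos; auto. left; apply Rinv_0_lt_compat, pow_lt; lra.
      apply Rmult_le_pos; left; apply wsq_pos.
    - eapply Rle_trans. apply Hu. rewrite Rmult_assoc. apply Rmult_le_compat_l; auto.
      apply inv_bound. lra. unfold N3. apply le_INR; lia. }
  destruct (DS_bound w _ Bw) as [DSw _].
  destruct (DS_bound v _ Bv) as [DSv Vb].
  destruct (DS_plus w v DSw DSv) as [_ Ewv].
  assert (Euwv : Series (fun i => Series (u i)) = Series (fun i => Series (fun j => w i j + v i j))).
  { apply Series_ext. intros i. apply Series_ext. intros j. unfold w, v.
    destruct (Nat.ltb (i + j) (S l)); ring. }
  assert (Sw : Series (fun i => Series (w i)) = fs (S l) (fun i => gq r m i (l + 2)) / N ^ n).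
  { assert (E1 : forall i, Series (w i) = fs (S l - i) (u i)).
    { intros i. destruct (finite_series (w i) (S l - i)) as [_ ->].
      - intros j Hj. unfold w. rewrite (proj2 (Nat.ltb_ge _ _)) by lia. reflexivity.
      - apply fs_ext_lt. intros j Hj. unfold w. rewrite (proj2 (Nat.ltb_lt _ _)) by lia. reflexivity. }
    rewrite (Series_ext _ _ E1).
    destruct (finite_series (fun i => fs (S l - i) (u i)) (S l)) as [_ ->].
    { intros i Hi. replace (S l - i)%nat with 0%nat by lia. reflexivity. }
    rewrite tri.
    assert (Ed : forall t, fs (S t) (fun i => u i (t - i)%nat) = fs (S t) (fun i => gq r m i (t + 2)) / INR (t + 2) ^ n).
    { intros t. unfold Rdiv. rewrite Rmult_comm, <- fs_scal. apply fs_ext_lt. intros i Hi.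
      unfold u. rewrite u_eq. replace (S i + S (t - i))%nat with (t + 2)%nat by lia. unfold Rdiv. ring. }
    set (Hs := fs (S l) (fun i => gq r m i (l + 2))).
    change (fs (S l) ?g) with (fs l g + g l). cbv beta. rewrite fs_zero.
    - rewrite Ed. fold N. fold Hs. ring.
    - intros t Ht. rewrite Ed, IH by lia. unfold Rdiv; ring. }
  rewrite Euwv, Ewv, Sw in G0.
  set (H := fs (S l) (fun i => gq r m i (l + 2))) in *.
  set (V := Series (fun i => Series (v i))) in *.
  assert (NP : 0 < N ^ n) by (apply pow_lt; lra).
  assert (N3P : 0 < N3 ^ p) by (apply pow_lt; lra).
  assert (EH : H = - (N ^ n * V)).
  { assert (E2 : H / N ^ n = - V) by lra.
    replace H with (H / N ^ n * N ^ n) by (field; lra). rewrite E2. ring. }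
  rewrite EH, Rabs_Ropp, Rabs_mult, Rabs_pos_eq by lra.
  replace (Cr r m * (Zs * Zs) * N ^ 4 * (N / N3) ^ p) with (N ^ n * (Cr r m * / N3 ^ p * (Zs * Zs))).
  - apply Rmult_le_compat_l; lra.
  - unfold n. rewrite pow_add. unfold Rdiv. rewrite Rpow_mult_distr, pow_inv. ring.
Qed.
Lemma indep m r : (forall p, fs (S m) (fun k => r k * Dr (2 * k) (p + 4)) = 0) ->
  forall k, (k <= m)%nat -> r k = 0.
Proof.
  intros H. apply alg_main. intros l. exact (extract r m H l).
Qed.

Lemma dz_Re c x i j : Re (dz_term c (x, 0) i j) = INR (S i) ^ c * exp (- (x + INR c) * ln (INR (S i + S j))).
Proof.
  unfold dz_term, cpow_neg. cbn [Re Im Cmult Cplus RtoC fst snd].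
  rewrite Rplus_0_r. repeat rewrite Rmult_0_l. rewrite ?cos_0, ?sin_0. ring.
Qed.

Lemma dz_Im c x i j : Im (dz_term c (x, 0) i j) = 0.
Proof.
  unfold dz_term, cpow_neg. cbn [Re Im Cmult Cplus RtoC fst snd].
  rewrite Rplus_0_r. repeat rewrite Rmult_0_l. rewrite ?cos_0, ?sin_0. ring.
Qed.

Lemma dz_Re_nat c n i j : Re (dz_term c (INR n, 0) i j) = fD c n i j.
Proof.
  rewrite dz_Re. unfold fD. rewrite <- plus_INR.
  rewrite Ropp_mult_distr_l_reverse, exp_Ropp.
  change (exp (INR (n + c) * ln (INR (S i + S j)))) with (Rpower (INR (S i + S j)) (INR (n + c))).
  rewrite Rpower_pow by (apply lt_0_INR; lia). reflexivity.
Qed.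

Lemma dzeta_real c n : dzeta c (INR n, 0) = (Dr c n, 0).
Proof.
  unfold dzeta, Dr. f_equal.
  - apply Series_ext. intros i. apply Series_ext. intros j. apply dz_Re_nat.
  - rewrite (Series_ext _ (fun _ => 0)). apply Series_zero.
    intros i. rewrite (Series_ext _ (fun _ => 0)). apply Series_zero. intros j. apply dz_Im.
Qed.

Definition wR (k : nat) : R := match k with O => / 2 | S _ => 1 end.

Lemma combo_Re m coef n : Re (combo m coef (INR n, 0)) =
  Dr (2 * m + 1) n + fs (S m) (fun k => Re (coef k) * wR k * Dr (2 * k) n).
Proof.
  unfold combo. cbn [Re Cplus fst]. rewrite dzeta_real. cbn [fst].
  change (fst (sum_n ?f m)) with (Re (sum_n f m)). rewrite sum_n_Re. f_equal.
  apply fs_ext. intros k. rewrite dzeta_real. destruct k; unfold Re, Im; cbn [Cmult RtoC fst snd wR]; ring.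
Qed.

Lemma combo_Im m coef n : Im (combo m coef (INR n, 0)) =
  fs (S m) (fun k => Im (coef k) * wR k * Dr (2 * k) n).
Proof.
  unfold combo. cbn [Im Cplus snd]. rewrite dzeta_real. cbn [snd].
  change (snd (sum_n ?f m)) with (Im (sum_n f m)). rewrite sum_n_Im. rewrite Rplus_0_l.
  apply fs_ext. intros k. rewrite dzeta_real. destruct k; unfold Re, Im; cbn [Cmult RtoC fst snd wR]; ring.
Qed.

Lemma wR_nz k : wR k <> 0.
Proof. destruct k; simpl; lra. Qed.

Theorem corollary5p3 (m : nat) (c d : nat -> C) :
  (forall s : C, 2 < Re s -> combo m c s = RtoC 0) ->
  (forall s : C, 2 < Re s -> combo m d s = RtoC 0) ->
  forall k : nat, (k <= m)%nat -> c k = d k.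
Proof.
  intros Hc Hd k Hk.
  assert (Hs : forall p, 2 < Re (INR (p + 4), 0)).
  { intros p. simpl Re. replace 2 with (INR 2) by (simpl; ring). apply lt_INR. lia. }
  assert (Ic : forall p, fs (S m) (fun k => Im (c k) * wR k * Dr (2 * k) (p + 4)) = 0).
  { intros p. rewrite <- combo_Im, (Hc _ (Hs p)). reflexivity. }
  assert (Id : forall p, fs (S m) (fun k => Im (d k) * wR k * Dr (2 * k) (p + 4)) = 0).
  { intros p. rewrite <- combo_Im, (Hd _ (Hs p)). reflexivity. }
  assert (Rcd : forall p, fs (S m) (fun k => (Re (c k) - Re (d k)) * wR k * Dr (2 * k) (p + 4)) = 0).
  { intros p. assert (E1 := combo_Re m c (p + 4)). assert (E2 := combo_Re m d (p + 4)).
    rewrite (Hc _ (Hs p)) in E1. rewrite (Hd _ (Hs p)) in E2. cbn [Re RtoC fst] in E1, E2.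
    rewrite (fs_ext _ _ (fun k => Re (c k) * wR k * Dr (2 * k) (p + 4) - Re (d k) * wR k * Dr (2 * k) (p + 4)))
      by (intros; ring).
    rewrite fs_minus. lra. }
  assert (A1 := indep m (fun k => Im (c k) * wR k) Ic k Hk).
  assert (A2 := indep m (fun k => Im (d k) * wR k) Id k Hk).
  assert (A3 := indep m (fun k => (Re (c k) - Re (d k)) * wR k) Rcd k Hk).
  cbv beta in A1, A2, A3.
  assert (W := wR_nz k).
  apply Rmult_integral in A1. apply Rmult_integral in A2. apply Rmult_integral in A3.
  destruct (c k) as [a b], (d k) as [a' b']. cbn [Re Im fst snd] in *.
  f_equal; [destruct A3 as [A3|A3]; [lra|tauto] | destruct A1, A2; try tauto; lra].
Qed.
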